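(* For integers $4<m\le n$, the algebra $\mathtt{A}_n^{\{3,m\}}$ is wild.
   Context: $\Bbbk$ is an algebraically closed field; arrows compose right to left. $\mathtt{A}_n$ is the algebra of the quiver with vertices $1,\dots,n$, arrows $a_i:i\to i+1$, $b_i:i+1\to i$ ($1\le i\le n-1$), relations $a_ib_i=b_{i+1}a_{i+1}$ ($1\le i\le n-2$), $a_{n-1}b_{n-1}=0$. For $X\subset\{2,\dots,n\}$, $e_X$ is the sum of primitive idempotents for vertices in $\{1\}\cup X$ and $\mathtt{A}_n^X=e_X\mathtt{A}_ne_X$. *)

(* Defs.v *)
From mathcomp Require Import all_boot all_order all_algebra.
From mathcomp Require Import mxtens.
Set Implicit Arguments.
Unset Strict Implicit.
Unset Printing Implicit Defensive.
Import GRing.Theory.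
Local Open Scope ring_scope.

(* The quiver of A_n.  Vertices are the natural numbers 1..n.          *)
(* An arrow is a pair (dir, i) with 1 <= i <= n-1:                     *)
(*   (true,  i) = a_i : i -> i+1,                                      *)
(*   (false, i) = b_i : i+1 -> i.                                      *)
(* A path is given by its starting vertex and the list of its arrows   *)
(* in the order in which they are traversed (so the path written      *)
(* alpha_k ... alpha_1 with right-to-left composition is stored as     *)
(* [:: alpha_1; ...; alpha_k]).  The trivial path e_x is (x, [::]).    *)

Definition arrow := (bool * nat)%type.

Definition arr_src (al : arrow) : nat := if al.1 then al.2 else al.2.+1.
Definition arr_tgt (al : arrow) : nat := if al.1 then al.2.+1 else al.2.

Definition arrow_of (n : nat) (al : arrow) : bool := (1 <= al.2 <= n.-1)%N.

Fixpoint path_end (x : nat) (p : seq arrow) : nat :=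
  if p is al :: p' then path_end (arr_tgt al) p' else x.

Fixpoint wf_path (n : nat) (x : nat) (p : seq arrow) : bool :=
  if p is al :: p' then
    [&& arrow_of n al, arr_src al == x & wf_path n (arr_tgt al) p']
  else (1 <= x <= n)%N.

Definition a_ (i : nat) : arrow := (true, i).
Definition b_ (i : nat) : arrow := (false, i).

(* The defining relations of A_n, each given as (vertex s at which the *)
(* relation is a loop, list of (coefficient, path from s to s)).       *)
(*  a_i b_i - b_{i+1} a_{i+1}  (1 <= i <= n-2), a loop at i+1;          *)
(*  a_{n-1} b_{n-1},          a loop at n.                             *)
(* (a_i b_i means: first b_i, then a_i.)                               *)
Definition relations (R : pzRingType) (n : nat)
  : seq (nat * seq (R * seq arrow)) :=
  [seq (i.+1, [:: (1, [:: b_ i; a_ i]); (-1, [:: a_ i.+1; b_ i.+1])])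
     | i <- iota 1 (n - 2)]
  ++ [:: (n, [:: (1, [:: b_ n.-1; a_ n.-1])])].

(* Finite-dimensional (left) modules over A_n^X = e_X A_n e_X,         *)
(* where V = {1} u X.  Since e_X A_n e_X = e_X kQ e_X / e_X I e_X has  *)
(* the paths of Q with both endpoints in V as a spanning set (of       *)
(* e_X kQ e_X), a d-dimensional module is the same as a function rho   *)
(* assigning a d x d matrix to every such path, which is multiplicative *)
(* (with rho(p)rho(q) = 0 for non-composable p, q), unital             *)
(* (sum_{x in V} rho(e_x) = 1) and kills e_X I e_X, which is spanned   *)
(* by the elements  u r v  with r a defining relation and u, v paths   *)
(* such that u r v starts and ends in V.                               *)

Definition Vset (X : seq nat) : seq nat := 1%N :: X.

Definition epath (n : nat) (X : seq nat) (x : nat) (p : seq arrow) : bool :=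
  [&& wf_path n x p, x \in Vset X & path_end x p \in Vset X].

Definition is_module (R : pzRingType) (n : nat) (X : seq nat) (d : nat)
  (rho : nat -> seq arrow -> 'M[R]_d) : Prop :=
  [/\ \sum_(x <- undup (Vset X)) rho x [::] = 1%:M,
      (forall x q y p, epath n X x q -> epath n X y p ->
         rho y p *m rho x q =
           if path_end x q == y then rho x (q ++ p) else 0)
    & (forall s rel, (s, rel) \in relations R n ->
       forall x v u, wf_path n x v -> path_end x v = s ->
         wf_path n s u -> x \in Vset X -> path_end s u \in Vset X ->
         \sum_(c <- rel) c.1 *: rho x (v ++ c.2 ++ u) = 0)].

Definition module_iso (R : pzRingType) (n : nat) (X : seq nat)
  (d1 : nat) (rho1 : nat -> seq arrow -> 'M[R]_d1)
  (d2 : nat) (rho2 : nat -> seq arrow -> 'M[R]_d2) : Prop :=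
  exists (P : 'M[R]_(d1, d2)) (Q : 'M[R]_(d2, d1)),
    [/\ P *m Q = 1%:M, Q *m P = 1%:M &
        forall x p, epath n X x p -> rho1 x p *m P = P *m rho2 x p].

Definition module_indec (R : pzRingType) (n : nat) (X : seq nat)
  (d : nat) (rho : nat -> seq arrow -> 'M[R]_d) : Prop :=
  (0 < d)%N /\
  forall E : 'M[R]_d,
    (forall x p, epath n X x p -> E *m rho x p = rho x p *m E) ->
    E *m E = E -> E = 0 \/ E = 1%:M.

(* Finite-dimensional modules over the free algebra k<x,y>: pairs of   *)
(* d x d matrices.                                                      *)

Definition kxy_iso (R : pzRingType) (d1 : nat) (X1 Y1 : 'M[R]_d1)
  (d2 : nat) (X2 Y2 : 'M[R]_d2) : Prop :=
  exists (P : 'M[R]_(d1, d2)) (Q : 'M[R]_(d2, d1)),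
    [/\ P *m Q = 1%:M, Q *m P = 1%:M,
        X1 *m P = P *m X2 & Y1 *m P = P *m Y2].

Definition kxy_indec (R : pzRingType) (d : nat) (X Y : 'M[R]_d) : Prop :=
  (0 < d)%N /\
  forall E : 'M[R]_d, E *m X = X *m E -> E *m Y = Y *m E ->
    E *m E = E -> E = 0 \/ E = 1%:M.

(* Noncommutative words in x (= true) and y (= false), evaluated at a *)
(* pair of matrices.                                                   *)
Definition word_eval (R : pzRingType) (d : nat) (w : seq bool)
  (X Y : 'M[R]_d) : 'M[R]_d :=
  foldr (fun (b : bool) M => (if b then X else Y) *m M) 1%:M w.

(* A matrix in M_r(k<x,y>) is represented as a finite formal sum       *)
(* sum_j C_j w_j with C_j in M_r(k) and w_j words.  Its value at a     *)
(* d-dimensional k<x,y>-module (X, Y) is the rd x rd matrix            *)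
(* sum_j C_j (x) w_j(X,Y).                                             *)
Definition ncmx_eval (R : pzRingType) (r d : nat)
  (f : seq (seq bool * 'M[R]_r)) (X Y : 'M[R]_d) : 'M[R]_(r * d) :=
  \sum_(c <- f) tensmx c.2 (word_eval c.1 X Y).

(* Wildness (Drozd): there is an A-k<x,y>-bimodule M which is free of  *)
(* finite rank r as a right k<x,y>-module, such that M (x)_{k<x,y>} -  *)
(* maps indecomposable finite-dimensional k<x,y>-modules to            *)
(* indecomposable A-modules and reflects isomorphism.                  *)
(* Such an M is given by the left action phi : A -> M_r(k<x,y>) of the *)
(* basis paths; M (x) N for N = (X, Y) is then k^r (x) N with the      *)
(* action obtained by evaluating phi at (X, Y).  That phi is an        *)
(* algebra homomorphism is expressed by requiring that every such     *)
(* evaluation is an A-module (equivalent, since no nonzero            *)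
(* noncommutative polynomial vanishes on all matrix algebras).        *)

Definition wild_AnX (R : pzRingType) (n : nat) (X : seq nat) : Prop :=
  exists (r : nat) (phi : nat -> seq arrow -> seq (seq bool * 'M[R]_r)),
    [/\ (forall (d : nat) (Xm Ym : 'M[R]_d),
           is_module n X (fun x p => ncmx_eval (phi x p) Xm Ym)),
        (forall (d : nat) (Xm Ym : 'M[R]_d), kxy_indec Xm Ym ->
           module_indec n X (fun x p => ncmx_eval (phi x p) Xm Ym))
      & (forall (d1 : nat) (X1 Y1 : 'M[R]_d1) (d2 : nat) (X2 Y2 : 'M[R]_d2),
           module_iso n X (fun x p => ncmx_eval (phi x p) X1 Y1)
                          (fun x p => ncmx_eval (phi x p) X2 Y2) ->
           kxy_iso X1 Y1 X2 Y2)].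

(* Main.v *)
Require Import Defs.
From mathcomp Require Import all_boot all_order all_algebra.
From mathcomp Require Import mxtens zify.
Set Implicit Arguments. Unset Strict Implicit. Unset Printing Implicit Defensive.
Import GRing.Theory.
Local Open Scope ring_scope.


Section Blocks.
Variable R : comPzRingType.

Definition blk {p q a b : nat} (M : 'M[R]_(p * a, q * b)) (s : 'I_p) (t : 'I_q)
  : 'M[R]_(a, b) :=
  \matrix_(i, j) M (mxtens_index (s, i)) (mxtens_index (t, j)).

Lemma blkD p q a b (M N : 'M[R]_(p*a,q*b)) s t :
  blk (M + N) s t = blk M s t + blk N s t.
Proof. by apply/matrixP=> i j; rewrite !mxE. Qed.

Lemma blk0 p q a b s t : blk (0 : 'M[R]_(p*a,q*b)) s t = 0.
Proof. by apply/matrixP=> i j; rewrite !mxE. Qed.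

Lemma blk_tens p q a b (A : 'M[R]_(p,q)) (B : 'M[R]_(a,b)) s t :
  blk (A *t B) s t = A s t *: B.
Proof. by apply/matrixP=> i j; rewrite [LHS]mxE tensmxE [RHS]mxE. Qed.

Lemma blk_mul p q r a b c (M : 'M[R]_(p*a, q*b)) (N : 'M[R]_(q*b, r*c)) s t :
  blk (M *m N) s t = \sum_(u < q) blk M s u *m blk N u t.
Proof.
apply/matrixP=> i j; rewrite !mxE summxE.
rewrite (eq_bigr (fun u => \sum_(l < b) blk M s u i l * blk N u t l j)); last first.
  by move=> u _; rewrite !mxE.
rewrite pair_big /=; symmetry.
rewrite (reindex (@mxtens_unindex q b)) /=; last first.
  by exists (@mxtens_index q b) => z _; rewrite (mxtens_indexK, mxtens_unindexK).
by apply: eq_bigr => w _; rewrite !mxE mxtens_unindexK.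
Qed.

Lemma blk_inj p q a b (M N : 'M[R]_(p*a,q*b)) :
  (forall s t, blk M s t = blk N s t) -> M = N.
Proof.
move=> H; apply/matrixP=> i j.
case: (mxtens_indexP i) => s k; case: (mxtens_indexP j) => t l.
by have := congr1 (fun A : 'M[R]_(a,b) => A k l) (H s t); rewrite !mxE.
Qed.

Lemma blk_deltaL p a b (i j : 'I_p) (B : 'M[R]_a) (P : 'M[R]_(p*a, p*b)) s t :
  blk ((delta_mx i j *t B) *m P) s t = if s == i then B *m blk P j t else 0.
Proof.
rewrite blk_mul (bigD1 j) //= big1 ?addr0; last first.
  by move=> u /negbTE uj; rewrite blk_tens mxE uj andbF scale0r mul0mx.
by rewrite blk_tens mxE eqxx andbT; case: (s == i);
  rewrite ?mulr1n ?mulr0n ?scale1r ?scale0r ?mul0mx.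
Qed.

Lemma blk_deltaR p a b (i j : 'I_p) (B : 'M[R]_b) (P : 'M[R]_(p*a, p*b)) s t :
  blk (P *m (delta_mx i j *t B)) s t = if t == j then blk P s i *m B else 0.
Proof.
rewrite blk_mul (bigD1 i) //= big1 ?addr0; last first.
  by move=> u /negbTE ui; rewrite blk_tens mxE ui scale0r mulmx0.
by rewrite blk_tens mxE eqxx /=; case: (t == j);
  rewrite ?mulr1n ?mulr0n ?scale1r ?scale0r ?mulmx0.
Qed.

Lemma tens11 p a : (1%:M : 'M[R]_p) *t (1%:M : 'M[R]_a) = 1%:M.
Proof.
apply/matrixP=> i j.
case: (mxtens_indexP i) => s k; case: (mxtens_indexP j) => t l.
rewrite tensmxE !mxE (can_eq (@mxtens_indexK _ _)) xpair_eqE.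
by case: (s == t); case: (k == l); rewrite ?mulr1 ?mulr0 ?mul0r.
Qed.

Lemma tensmxDl p q a b (A B : 'M[R]_(p,q)) (C : 'M[R]_(a,b)) :
  (A + B) *t C = A *t C + B *t C.
Proof. by apply/matrixP=> i j; rewrite !mxE mulrDl. Qed.

End Blocks.

Definition o0 : 'I_8 := @Ordinal 8 0 isT.
Definition o1 : 'I_8 := @Ordinal 8 1 isT.
Definition o2 : 'I_8 := @Ordinal 8 2 isT.
Definition o3 : 'I_8 := @Ordinal 8 3 isT.
Definition o4 : 'I_8 := @Ordinal 8 4 isT.
Definition o5 : 'I_8 := @Ordinal 8 5 isT.
Definition o6 : 'I_8 := @Ordinal 8 6 isT.
Definition o7 : 'I_8 := @Ordinal 8 7 isT.

Lemma ord8_ind (Q : 'I_8 -> Prop) :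
  Q o0 -> Q o1 -> Q o2 -> Q o3 -> Q o4 -> Q o5 -> Q o6 -> Q o7 -> forall s, Q s.
Proof.
move=> H0 H1 H2 H3 H4 H5 H6 H7 [[|[|[|[|[|[|[|[|s]]]]]]]] Hs] //;
  by have -> : Hs = isT by apply: eq_irrelevance.
Qed.


Section Rep.
Variable F : comPzRingType.
Variable m : nat.

Definition vtx (i : 'I_8) : nat :=
  match val i with 0 | 4 => 1 | 1 | 2 | 5 | 6 => 3 | _ => m end.

Definition idm (x : nat) : 'M[F]_8 :=
  \matrix_(i, j) (((i == j) && (vtx i == x)%N)%:R).

Definition gen (x z l : nat) : seq (seq bool * 'M[F]_8) :=
  if [&& ( x == 1)%N, (z == 1)%N & (l == 2)%N] then [:: ([:: true], delta_mx o4 o0)]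
  else if [&& ( x == 1)%N, (z == 3)%N & (l == 2)%N] then [:: ([::], delta_mx o5 o0)]
  else if [&& ( x == 3)%N, (z == 1)%N & (l == 2)%N] then
    [:: ([::], delta_mx o4 o1); ([::], delta_mx o4 o2)]
  else if [&& ( x == 3)%N, (z == 3)%N & (l == 2)%N] then
    [:: ([::], delta_mx o5 o1); ([::], delta_mx o6 o2)]
  else if [&& ( x == 3)%N, (z == m)%N & (l == (m - 3)%N)%N] then
    [:: ([::], delta_mx o7 o1); ([:: false], delta_mx o7 o2)]
  else if [&& ( x == m)%N, (z == 3)%N & (l == (m - 3)%N)%N] then [:: ([::], delta_mx o6 o3)]
  else [::].

Definition phi (x : nat) (p : seq arrow) : seq (seq bool * 'M[F]_8) :=
  if p is [::] then [:: ([::], idm x)]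
  else gen x (path_end x p) (size p).

Definition supp (z x : nat) (C : 'M[F]_8) :=
  forall i j, C i j != 0 -> [&& vtx i == z, vtx j == x, (4 <= i)%N & (j < 4)%N].

Lemma supp_delta (z x : nat) (i j : 'I_8) : vtx i == z -> vtx j == x ->
  (4 <= i)%N -> (j < 4)%N -> supp z x (delta_mx i j).
Proof.
move=> h1 h2 h3 h4 i' j'; rewrite mxE.
by case: (i' =P i) => [->|]; case: (j' =P j) => [->|] //=; rewrite ?h1 ?h2 ?h3 ?h4 // eqxx.
Qed.

Lemma gen_supp (x z l : nat) c : c \in gen x z l -> supp z x c.2.
Proof.
rewrite /gen.
case: ifP => [/and3P [/eqP -> /eqP -> _]|_].
  by rewrite inE => /eqP -> /=; apply: supp_delta.
case: ifP => [/and3P [/eqP -> /eqP -> _]|_].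
  by rewrite inE => /eqP -> /=; apply: supp_delta.
case: ifP => [/and3P [/eqP -> /eqP -> _]|_].
  by rewrite !inE => /orP [] /eqP -> /=; apply: supp_delta.
case: ifP => [/and3P [/eqP -> /eqP -> _]|_].
  by rewrite !inE => /orP [] /eqP -> /=; apply: supp_delta.
case: ifP => [/and3P [/eqP -> /eqP -> _]|_].
  by rewrite !inE => /orP [] /eqP -> /=; apply: supp_delta.
case: ifP => [/and3P [/eqP -> /eqP -> _]|_] //.
by rewrite inE => /eqP -> /=; apply: supp_delta.
Qed.

Lemma supp_mul (z x z' x' : nat) (C D : 'M[F]_8) : supp z x C -> supp z' x' D -> C *m D = 0.
Proof.
move=> hC hD; apply/matrixP=> i j; rewrite !mxE big1 // => u _.
case: (C i u =P 0) => [->|/eqP h1]; first by rewrite mul0r.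
case: (D u j =P 0) => [->|/eqP h2]; first by rewrite mulr0.
by move: (hC _ _ h1) (hD _ _ h2) => /and4P [_ _ _ hu1] /and4P [_ _ hu2 _]; move: hu1 hu2; lia.
Qed.

Lemma idm_suppL (y z x : nat) (C : 'M[F]_8) : supp z x C -> idm y *m C = if z == y then C else 0.
Proof.
move=> hC; apply/matrixP=> i j; rewrite !mxE (bigD1 i) //= big1 ?addr0; last first.
  by move=> u /negbTE hu; rewrite mxE eq_sym hu mul0r.
rewrite mxE eqxx /=.
case: (C i j =P 0) => [e|/eqP h]; first by rewrite e mulr0; case: (z == y); rewrite ?mxE ?e.
move: (hC _ _ h) => /and4P [/eqP e _ _ _]; rewrite e.
by case: (z == y); rewrite /= ?mxE ?mulr1n ?mul1r ?mulr0n ?mul0r.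
Qed.

Lemma idm_suppR (y z x : nat) (C : 'M[F]_8) : supp z x C -> C *m idm y = if x == y then C else 0.
Proof.
move=> hC; apply/matrixP=> i j; rewrite !mxE (bigD1 j) //= big1 ?addr0; last first.
  by move=> u /negbTE hu; rewrite mxE hu mulr0.
rewrite mxE eqxx /=.
case: (C i j =P 0) => [e|/eqP h]; first by rewrite e mul0r; case: (x == y); rewrite ?mxE ?e.
move: (hC _ _ h) => /and4P [_ /eqP e _ _]; rewrite e.
by case: (x == y); rewrite /= ?mxE ?mulr1n ?mulr1 ?mulr0n ?mulr0.
Qed.

Lemma idm_mul (x y : nat) : idm y *m idm x = if x == y then idm x else 0.
Proof.
apply/matrixP=> i j; rewrite !mxE (bigD1 i) //= big1 ?addr0; last first.
  by move=> u /negbTE hu; rewrite mxE eq_sym hu mul0r.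
rewrite !mxE eqxx /=.
case: (x =P y) => [->|ne].
  by rewrite mxE; case: (i == j); case: (vtx i == y); rewrite /= ?mulr1n ?mulr0n ?mulr1 ?mulr0.
rewrite mxE; case: (vtx i =P y) => [e|]; last by rewrite /= mulr0n mul0r.
case: (vtx i =P x) => [e2|]; last by rewrite andbF /= mulr0n mulr0.
by exfalso; apply: ne; rewrite -e -e2.
Qed.

Section Eval.
Variables (d : nat) (X Y : 'M[F]_d).

Lemma eval_nil : ncmx_eval ([::] : seq (seq bool * 'M[F]_8)) X Y = 0.
Proof. by rewrite /ncmx_eval big_nil. Qed.

Lemma eval_phi_nil x : ncmx_eval (phi x [::]) X Y = idm x *t 1%:M.
Proof. by rewrite /ncmx_eval /= big_cons big_nil addr0. Qed.

Lemma phi_cons x p : p != [::] -> phi x p = gen x (path_end x p) (size p).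
Proof. by case: p. Qed.

Lemma eval_mul0 x z l x' z' l' :
  ncmx_eval (gen x z l) X Y *m ncmx_eval (gen x' z' l') X Y = 0.
Proof.
rewrite /ncmx_eval mulmx_suml big1_seq // => c hc.
rewrite mulmx_sumr big1_seq // => c' hc'.
by rewrite tensmx_mul (supp_mul (gen_supp hc) (gen_supp hc')) tens0mx.
Qed.

Lemma eval_idL y x z l :
  (idm y *t 1%:M) *m ncmx_eval (gen x z l) X Y =
  if z == y then ncmx_eval (gen x z l) X Y else 0.
Proof.
rewrite /ncmx_eval mulmx_sumr; case: ifP => h.
  by apply: eq_big_seq => c hc; rewrite tensmx_mul mul1mx (idm_suppL _ (gen_supp hc)) h.
by apply: big1_seq => c hc; rewrite tensmx_mul mul1mx (idm_suppL _ (gen_supp hc)) h tens0mx.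
Qed.

Lemma eval_idR y x z l :
  ncmx_eval (gen x z l) X Y *m (idm y *t 1%:M) =
  if x == y then ncmx_eval (gen x z l) X Y else 0.
Proof.
rewrite /ncmx_eval mulmx_suml; case: ifP => h.
  by apply: eq_big_seq => c hc; rewrite tensmx_mul mulmx1 (idm_suppR _ (gen_supp hc)) h.
by apply: big1_seq => c hc; rewrite tensmx_mul mulmx1 (idm_suppR _ (gen_supp hc)) h tens0mx.
Qed.

End Eval.

Lemma gen_nil_cat (x y z l1 l2 : nat) : (5 <= m)%N ->
  x \in [:: 1%N; 3%N; m] -> y \in [:: 1%N; 3%N; m] -> z \in [:: 1%N; 3%N; m] ->
  (2 <= l1)%N -> (2 <= l2)%N -> (x - y + (y - x) <= l1)%N -> (y - z + (z - y) <= l2)%N ->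
  gen x z (l1 + l2) = [::].
Proof.
rewrite !inE => hm hx hy hz h1 h2 h3 h4; rewrite /gen.
do 6 (case: ifP => [/and3P [/eqP ? /eqP ? /eqP ?]|_]; first by exfalso; lia).
by [].
Qed.

Lemma gen_nil_far (n x z l : nat) : (5 <= m)%N -> (m <= n)%N ->
  x \in [:: 1%N; 3%N; m] -> z \in [:: 1%N; 3%N; m] ->
  (n - x + 2 + (n - z) <= l)%N -> gen x z l = [::].
Proof.
rewrite !inE => hm hn hx hz h; rewrite /gen.
do 6 (case: ifP => [/and3P [/eqP ? /eqP ? /eqP ?]|_]; first by exfalso; lia).
by [].
Qed.

End Rep.

Lemma path_end_cat x p q : path_end x (p ++ q) = path_end (path_end x p) q.
Proof. by elim: p x => [|al p IH] x //=. Qed.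

Lemma wf_dist n x p : wf_path n x p ->
  (x - path_end x p + (path_end x p - x) <= size p)%N.
Proof.
elim: p x => [|[[] i] p IH] x /=; first by rewrite !subnn.
  move=> /and3P [_ /eqP hx /IH]; rewrite /arr_src /arr_tgt /= in hx *; lia.
move=> /and3P [_ /eqP hx /IH]; rewrite /arr_src /arr_tgt /= in hx *; lia.
Qed.

Lemma wf_size2 m n x p : (5 <= m)%N -> wf_path n x p -> p != [::] ->
  x \in [:: 1%N; 3%N; m] -> path_end x p \in [:: 1%N; 3%N; m] -> (2 <= size p)%N.
Proof.
move=> hm; case: p => [|[[] i] [|bl p]] //= /and3P [_ /eqP hx _] _;
  rewrite /arr_src /arr_tgt /= in hx *; rewrite !inE; lia.
Qed.


Section Mod.
Variable F : comPzRingType.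
Variable m : nat.

Lemma idm_sum : (5 <= m)%N -> idm F m 1%N + idm F m 3%N + idm F m m = 1%:M.
Proof.
move=> hm; have h1 : (1 == m)%N = false by apply/eqP; lia.
have h3 : (3 == m)%N = false by apply/eqP; lia.
apply/matrixP=> i j; rewrite !mxE.
case: (i == j); rewrite /= ?mulr0n ?addr0 //.
have h1' : (m == 1)%N = false by rewrite eq_sym.
have h3' : (m == 3)%N = false by rewrite eq_sym.
by move: i; apply: ord8_ind; rewrite /vtx /= ?h1 ?h3 ?h1' ?h3' ?eqxx /= ?mulr1n ?mulr0n ?addr0 ?add0r.
Qed.

Lemma module_ok n d (X Y : 'M[F]_d) : (4 < m)%N -> (m <= n)%N ->
  is_module n [:: 3%N; m] (fun x p => ncmx_eval (phi F m x p) X Y).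
Proof.
move=> hm hmn; have hm5 : (5 <= m)%N by [].
have h1 : (1 == m)%N = false by apply/eqP; lia.
have h3 : (3 == m)%N = false by apply/eqP; lia.
split.
- rewrite /Vset /= !inE h1 h3 /= !big_cons big_nil addr0 !eval_phi_nil.
  by rewrite -!tensmxDl addrA idm_sum // tens11.
- move=> x q y p /and3P [wq xq eq] /and3P [wp yp ep].
  case: q wq eq => [|al q] wq eq; case: p wp ep => [|bl p] wp ep.
  + rewrite !eval_phi_nil tensmx_mul mul1mx idm_mul.
    by case: (x == y); rewrite ?tens0mx.
  + rewrite eval_phi_nil eval_idR eq_sym.
    by case: eqP => [->|].
  + by rewrite eval_phi_nil eval_idL cats0.
  + rewrite eval_mul0; case: eqP => // hy.
    rewrite phi_cons // path_end_cat hy size_cat.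
    rewrite (@gen_nil_cat F m x y) ?eval_nil //.
    * exact: (wf_size2 hm5 wq isT xq eq).
    * exact: (wf_size2 hm5 wp isT yp ep).
    * by have := wf_dist wq; rewrite hy.
    * exact: wf_dist wp.
- move=> s rel hrel x v u wv ev wu xv ev'.
  move: hrel; rewrite mem_cat => /orP [/mapP [i hi [es er]] | ].
    rewrite {}es in ev wu ev'; rewrite {}er !big_cons big_nil addr0 /=.
    rewrite !phi_cons; try by case: v {wv ev}.
    rewrite !path_end_cat ev /= !size_cat /=.
    by rewrite scale1r scaleN1r subrr.
  rewrite mem_seq1 => /eqP [es er]; rewrite {}es in ev wu ev'; rewrite {}er.
  rewrite !big_cons big_nil addr0 /= scale1r.
  rewrite phi_cons; last by case: v {wv ev}.
  rewrite !path_end_cat ev /= /arr_tgt /= prednK; last by lia.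
  rewrite !size_cat /= (@gen_nil_far F m n) ?eval_nil //.
  have := wf_dist wv; have := wf_dist wu; rewrite ev.
have key : forall a b c dd e : nat, (a - b + (b - a) <= c)%N -> (dd - a + (a - dd) <= e)%N -> (a - dd + 2 + (a - b) <= e + c.+2)%N by move=> *; lia.
exact: key.
Qed.

End Mod.


Section Inter.
Variable R : comPzRingType.

Lemma intertw a b (X1 Y1 : 'M[R]_a) (X2 Y2 : 'M[R]_b) (P : 'M[R]_(8*a, 8*b)) :
  (delta_mx o4 o0 *t X1) *m P = P *m (delta_mx o4 o0 *t X2) ->
  (delta_mx o5 o0 *t (1%:M : 'M[R]_a)) *m P = P *m (delta_mx o5 o0 *t (1%:M : 'M[R]_b)) ->
  (delta_mx o4 o1 *t (1%:M : 'M[R]_a) + delta_mx o4 o2 *t (1%:M : 'M[R]_a)) *m P =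
    P *m (delta_mx o4 o1 *t (1%:M : 'M[R]_b) + delta_mx o4 o2 *t (1%:M : 'M[R]_b)) ->
  (delta_mx o5 o1 *t (1%:M : 'M[R]_a) + delta_mx o6 o2 *t (1%:M : 'M[R]_a)) *m P =
    P *m (delta_mx o5 o1 *t (1%:M : 'M[R]_b) + delta_mx o6 o2 *t (1%:M : 'M[R]_b)) ->
  (delta_mx o7 o1 *t (1%:M : 'M[R]_a) + delta_mx o7 o2 *t Y1) *m P =
    P *m (delta_mx o7 o1 *t (1%:M : 'M[R]_b) + delta_mx o7 o2 *t Y2) ->
  (delta_mx o6 o3 *t (1%:M : 'M[R]_a)) *m P = P *m (delta_mx o6 o3 *t (1%:M : 'M[R]_b)) ->
  [/\ forall s t : 'I_8, (s < 4)%N -> blk P s t = if s == t then blk P o0 o0 else 0,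
      forall s t : 'I_8, (4 <= t)%N -> blk P s t = if s == t then blk P o0 o0 else 0,
      X1 *m blk P o0 o0 = blk P o0 o0 *m X2 & Y1 *m blk P o0 o0 = blk P o0 o0 *m Y2].
Proof.
move=> HN1 Hal Hbe HN3 Hga Hde.
have R0 t : blk P o0 t = if t == o0 then blk P o5 o5 else 0.
  move: (congr1 (fun M => blk M o5 t) Hal) => /=.
  rewrite blk_deltaL blk_deltaR eqxx mul1mx => ->.
  by case: (t == o0); rewrite ?mulmx1.
have C5 s : blk P s o5 = if s == o5 then blk P o0 o0 else 0.
  move: (congr1 (fun M => blk M s o0) Hal) => /=.
  rewrite blk_deltaL blk_deltaR eqxx mulmx1 => <-.
  by case: (s == o5); rewrite ?mul1mx.
have R3 t : blk P o3 t = if t == o3 then blk P o6 o6 else 0.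
  move: (congr1 (fun M => blk M o6 t) Hde) => /=.
  rewrite blk_deltaL blk_deltaR eqxx mul1mx => ->.
  by case: (t == o3); rewrite ?mulmx1.
have C6 s : blk P s o6 = if s == o6 then blk P o3 o3 else 0.
  move: (congr1 (fun M => blk M s o3) Hde) => /=.
  rewrite blk_deltaL blk_deltaR eqxx mulmx1 => <-.
  by case: (s == o6); rewrite ?mul1mx.
have R1 t : blk P o1 t = if t == o1 then blk P o5 o5 else 0.
  move: (congr1 (fun M => blk M o5 t) HN3) => /=.
  rewrite mulmxDl mulmxDr !blkD !blk_deltaL !blk_deltaR eqxx /= mul1mx addr0 C6 /= => ->.
  by case: (t == o1); case: (t == o2); rewrite ?mulmx1 ?mul0mx ?addr0 ?add0r.
have R2 t : blk P o2 t = if t == o2 then blk P o6 o6 else 0.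
  move: (congr1 (fun M => blk M o6 t) HN3) => /=.
  rewrite mulmxDl mulmxDr !blkD !blk_deltaL !blk_deltaR eqxx /= mul1mx add0r C5 /= => ->.
  by case: (t == o1); case: (t == o2); rewrite ?mulmx1 ?mul0mx ?addr0 ?add0r.
have C4 s : blk P s o4 = if s == o4 then blk P o5 o5 else 0.
  move: (congr1 (fun M => blk M s o1) Hbe) => /=.
  rewrite mulmxDl mulmxDr !blkD !blk_deltaL !blk_deltaR eqxx /= mulmx1 addr0 R1 R2 /= => <-.
  by case: (s == o4); rewrite ?mul1mx ?addr0.
have E66 : blk P o6 o6 = blk P o5 o5.
  move: (congr1 (fun M => blk M o4 o2) Hbe) => /=.
  rewrite mulmxDl mulmxDr !blkD !blk_deltaL !blk_deltaR /= !mul1mx mulmx1 add0r R1 R2 C4 /= add0r.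
  by [].
have C7 s : blk P s o7 = if s == o7 then blk P o5 o5 else 0.
  move: (congr1 (fun M => blk M s o1) Hga) => /=.
  rewrite mulmxDl mulmxDr !blkD !blk_deltaL !blk_deltaR eqxx /= R1 R2 /= mulmx1.
  by case: (s == o7); rewrite ?mul1mx ?mulmx0 ?addr0 ?add0r => <-.
have HY : Y1 *m blk P o5 o5 = blk P o5 o5 *m Y2.
  move: (congr1 (fun M => blk M o7 o2) Hga) => /=.
  by rewrite mulmxDl mulmxDr !blkD !blk_deltaL !blk_deltaR /= !mul1mx add0r R1 R2 C7 /= add0r E66.
have E00 : blk P o0 o0 = blk P o5 o5 by rewrite R0.
have E33 : blk P o3 o3 = blk P o5 o5 by rewrite R3 E66.
have HX : X1 *m blk P o0 o0 = blk P o0 o0 *m X2.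
  move: (congr1 (fun M => blk M o4 o0) HN1) => /=.
  by rewrite blk_deltaL blk_deltaR /= C4 E00.
rewrite E00; split; last by [].
- move=> s t; move: s; apply: ord8_ind => //= _.
  + by rewrite R0 (eq_sym t).
  + by rewrite R1 (eq_sym t).
  + by rewrite R2 (eq_sym t) E66.
  + by rewrite R3 (eq_sym t) E66.

- move=> s t; move: t; apply: ord8_ind => //= _.
  all: try by rewrite C4.
  all: try by rewrite C5 E00.
  all: try by rewrite C6 E33.
  all: try by rewrite C7.
- by rewrite -E00.
Qed.

End Inter.


Fixpoint up (i k : nat) : seq arrow := if k is k'.+1 then a_ i :: up i.+1 k' else [::].
Fixpoint down (i k : nat) : seq arrow :=
  if k is k'.+1 then b_ i.-1 :: down i.-1 k' else [::].

Lemma up_end i k : path_end i (up i k) = (i + k)%N.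
Proof. by elim: k i => [|k IH] i /=; rewrite ?addn0 // IH addSnnS. Qed.
Lemma up_size i k : size (up i k) = k.
Proof. by elim: k i => [|k IH] i //=; rewrite IH. Qed.
Lemma up_wf n i k : (1 <= i)%N -> (i + k <= n)%N -> wf_path n i (up i k).
Proof.
elim: k i => [|k IH] i h1 h2 /=; first by apply/andP; split => //; lia.
apply/and3P; split; rewrite /arrow_of /arr_src /arr_tgt /= ?eqxx //.
  by apply/andP; split => //; lia.
by apply: IH; lia.
Qed.
Lemma down_end i k : (k <= i)%N -> path_end i (down i k) = (i - k)%N.
Proof. by elim: k i => [|k IH] i h /=; rewrite ?subn0 // /arr_tgt /= IH; lia. Qed.
Lemma down_size i k : size (down i k) = k.
Proof. by elim: k i => [|k IH] i //=; rewrite IH. Qed.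
Lemma down_wf n i k : (k < i)%N -> (i <= n)%N -> wf_path n i (down i k).
Proof.
elim: k i => [|k IH] i h1 h2 /=; first by apply/andP; split => //; lia.
apply/and3P; split; rewrite /arrow_of /arr_src /arr_tgt /=.
- by apply/andP; split; lia.
- by apply/eqP; lia.
by apply: IH; lia.
Qed.

Section Main.
Variable F : comPzRingType.

Lemma eval1 d (X Y : 'M[F]_d) (c : seq bool * 'M[F]_8) :
  ncmx_eval [:: c] X Y = c.2 *t word_eval c.1 X Y.
Proof. by rewrite /ncmx_eval big_cons big_nil addr0. Qed.
Lemma eval2 d (X Y : 'M[F]_d) (c c' : seq bool * 'M[F]_8) :
  ncmx_eval [:: c; c'] X Y = c.2 *t word_eval c.1 X Y + c'.2 *t word_eval c'.1 X Y.
Proof. by rewrite /ncmx_eval !big_cons big_nil addr0. Qed.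
Lemma we0 d (X Y : 'M[F]_d) : word_eval [::] X Y = 1%:M. Proof. by []. Qed.
Lemma we1 d (X Y : 'M[F]_d) : word_eval [:: true] X Y = X.
Proof. by rewrite /word_eval /= mulmx1. Qed.
Lemma we2 d (X Y : 'M[F]_d) : word_eval [:: false] X Y = Y.
Proof. by rewrite /word_eval /= mulmx1. Qed.

Lemma gens m n d1 d2 (X1 Y1 : 'M[F]_d1) (X2 Y2 : 'M[F]_d2) (P : 'M[F]_(8*d1, 8*d2)) :
  (4 < m)%N -> (m <= n)%N ->
  (forall x p, epath n [:: 3%N; m] x p ->
     ncmx_eval (phi F m x p) X1 Y1 *m P = P *m ncmx_eval (phi F m x p) X2 Y2) ->
  [/\ forall s t : 'I_8, (s < 4)%N -> blk P s t = if s == t then blk P o0 o0 else 0,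
      forall s t : 'I_8, (4 <= t)%N -> blk P s t = if s == t then blk P o0 o0 else 0,
      X1 *m blk P o0 o0 = blk P o0 o0 *m X2 & Y1 *m blk P o0 o0 = blk P o0 o0 *m Y2].
Proof.
move=> hm hmn H.
have hm1 : (m == 1)%N = false by apply/eqP; lia.
have hm3 : (m == 3)%N = false by apply/eqP; lia.
have hk : ((m - 4).+1 == m - 3)%N by apply/eqP; lia.
apply: intertw.
- have e : epath n [:: 3%N; m] 1 [:: a_ 1; b_ 1].
    rewrite /epath /= /arrow_of /arr_tgt /arr_src /= !inE ?eqxx /= ?orbT ?andbT.
    by repeat (apply/andP; split); lia.
  by move: (H _ _ e); rewrite /phi /arr_tgt /= ?eval1 ?eval2 /= ?mulmx1.
- have e : epath n [:: 3%N; m] 1 [:: a_ 1; a_ 2].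
    rewrite /epath /= /arrow_of /arr_tgt /arr_src /= !inE ?eqxx /= ?orbT ?andbT.
    by repeat (apply/andP; split); lia.
  by move: (H _ _ e); rewrite /phi /arr_tgt /= ?eval1 ?eval2 /= ?mulmx1.
- have e : epath n [:: 3%N; m] 3 [:: b_ 2; b_ 1].
    rewrite /epath /= /arrow_of /arr_tgt /arr_src /= !inE ?eqxx /= ?orbT ?andbT.
    by repeat (apply/andP; split); lia.
  by move: (H _ _ e); rewrite /phi /arr_tgt /= ?eval1 ?eval2 /= ?mulmx1.
- have e : epath n [:: 3%N; m] 3 [:: b_ 2; a_ 2].
    rewrite /epath /= /arrow_of /arr_tgt /arr_src /= !inE ?eqxx /= ?orbT ?andbT.
    by repeat (apply/andP; split); lia.
  by move: (H _ _ e); rewrite /phi /arr_tgt /= ?eval1 ?eval2 /= ?mulmx1.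
- have em : (3 + (m - 4).+1)%N = m by lia.
  have e : epath n [:: 3%N; m] 3 (up 3 (m - 4).+1).
    apply/and3P; split; [by apply: up_wf; lia | by rewrite !inE eqxx ?orbT |].
    by rewrite up_end em !inE eqxx ?orbT.
  move: (H _ _ e); rewrite /phi -/(up 3 (m - 4).+1) up_end em up_size.
  by rewrite /gen /= hm1 hm3 eqxx hk /= !eval2 /= !mulmx1.
- have em : (m - (m - 4).+1)%N = 3%N by lia.
  have e : epath n [:: 3%N; m] m (down m (m - 4).+1).
    apply/and3P; split; [by apply: down_wf; lia | by rewrite !inE eqxx ?orbT |].
    by rewrite down_end ?em ?inE ?eqxx ?orbT //; lia.
  move: (H _ _ e); rewrite /phi -/(down m (m - 4).+1) down_end ?em; last by lia.
  by rewrite down_size /gen /= hm1 hm3 eqxx hk /= !eval1 /= ?mulmx1.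
Qed.

Lemma blk1 a (s t : 'I_8) : blk (1%:M : 'M[F]_(8*a)) s t = (s == t)%:R *: 1%:M.
Proof. by rewrite -tens11 blk_tens mxE. Qed.

Lemma row0_mul a b c (P : 'M[F]_(8*a, 8*b)) (Q : 'M[F]_(8*b, 8*c)) :
  (forall t : 'I_8, blk P o0 t = if o0 == t then blk P o0 o0 else 0) ->
  blk (P *m Q) o0 o0 = blk P o0 o0 *m blk Q o0 o0.
Proof.
move=> hr; rewrite blk_mul (bigD1 o0) //= big1 ?addr0 // => u hu.
by rewrite hr eq_sym (negbTE hu) mul0mx.
Qed.

Lemma E_final d (X Y : 'M[F]_d) (E : 'M[F]_(8*d)) : kxy_indec X Y ->
  [/\ forall s t : 'I_8, (s < 4)%N -> blk E s t = if s == t then blk E o0 o0 else 0,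
      forall s t : 'I_8, (4 <= t)%N -> blk E s t = if s == t then blk E o0 o0 else 0,
      X *m blk E o0 o0 = blk E o0 o0 *m X & Y *m blk E o0 o0 = blk E o0 o0 *m Y] ->
  E *m E = E -> E = 0 \/ E = 1%:M.
Proof.
move=> [_ Hind] [Hr Hc HX HY] HEE.
set G := blk E o0 o0 in Hr Hc HX HY *.
have GG : G *m G = G.
  by rewrite /G -{3}HEE row0_mul // => t; exact: Hr.
have hp (s t : 'I_8) : (4 <= s)%N -> (t < 4)%N -> blk E s t = blk E s t *m G + G *m blk E s t.
  move=> hs ht; have hst : s != t by apply/eqP => e; rewrite e in hs; lia.
  rewrite -{1}HEE blk_mul (bigD1 t) //= (bigD1 s) /=; last by [].
  rewrite big1 ?addr0; last first.
    move=> u /andP [hut hus]; case: (ltnP u 4) => hu.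
      by rewrite (Hr u t hu) (negbTE hut) mulmx0.
    by rewrite (Hc s u hu) eq_sym (negbTE hus) mul0mx.
  by rewrite (Hr t t ht) eqxx (Hc s s hs) eqxx.
have key (s t : 'I_8) : blk E s t = if s == t then G else 0.
  case: (ltnP s 4) => hs; first exact: Hr.
  case: (leqP 4 t) => ht; first exact: Hc.
  have -> : (s == t) = false by apply/eqP => e; rewrite e in hs; lia.
  have h := hp s t hs ht.
  have [G0|G1] := Hind G (esym HX) (esym HY) GG.
    by rewrite h G0 mulmx0 mul0mx addr0.
  move: h; rewrite G1 mulmx1 mul1mx => h.
  by have := congr1 (fun z => z - blk E s t) h; rewrite addrK subrr.
have [G0|G1] := Hind G (esym HX) (esym HY) GG.
  left; apply: blk_inj => s t; rewrite key blk0 G0; by case: (s == t).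
right; apply: blk_inj => s t; rewrite key blk1 G1.
by case: (s == t); rewrite /= ?scale1r ?scale0r.
Qed.

End Main.


Lemma iso_final (F : comPzRingType) m n d1 (X1 Y1 : 'M[F]_d1) d2 (X2 Y2 : 'M[F]_d2) :
  (4 < m)%N -> (m <= n)%N ->
  module_iso n [:: 3%N; m] (fun x p => ncmx_eval (phi F m x p) X1 Y1)
                            (fun x p => ncmx_eval (phi F m x p) X2 Y2) ->
  kxy_iso X1 Y1 X2 Y2.
Proof.
move=> hm hmn [P [Q [PQ QP HP]]].
have HQ x p : epath n [:: 3%N; m] x p ->
    ncmx_eval (phi F m x p) X2 Y2 *m Q = Q *m ncmx_eval (phi F m x p) X1 Y1.
  move=> e; rewrite -[RHS]mulmx1 -PQ [RHS]mulmxA -(mulmxA Q) (HP _ _ e) (mulmxA Q P) QP mul1mx.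
  by [].
have [Pr Pc PX PY] := gens hm hmn HP.
have [Qr Qc QX QY] := gens hm hmn HQ.
exists (blk P o0 o0), (blk Q o0 o0); split => //.
- have := congr1 (fun M => blk M o0 o0) PQ.
  by rewrite row0_mul ?blk1 ?eqxx /= ?mulr1n ?scale1r // => t; exact: Pr.
- have := congr1 (fun M => blk M o0 o0) QP.
  by rewrite row0_mul ?blk1 ?eqxx /= ?mulr1n ?scale1r // => t; exact: Qr.
Qed.

Theorem lemma2 (k : closedFieldType) (m n : nat) :
  (4 < m)%N -> (m <= n)%N -> wild_AnX k n [:: 3%N; m].
Proof.
move=> hm hmn; exists 8%N, (phi k m); split.
- move=> d X Y; exact: module_ok.
- move=> d X Y hi; split; first by case: hi => hd _; rewrite muln_gt0.
  move=> E HE HEE; apply: (E_final hi) => //.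
  apply: (@gens k m n d d X Y X Y E hm hmn) => x p e.
  by rewrite (HE _ _ e).
- move=> d1 X1 Y1 d2 X2 Y2; exact: iso_final.
Qed.
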